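(* Let $(C,d_1+\cdots+d_k)$ be a finite-dimensional graded chain complex over a field, where $d_i$ raises the grading by $i$ (so the grading induces a filtration), and suppose its total homology is trivial. Suppose $C$ is concentrated in three adjacent gradings with graded pieces $C_1,C_2,C_3$ satisfying $\dim(C_2)=\dim(C_1)+\dim(C_3)$. Then $H_*(C,d_1)=0$. *)

(* Defs.v *)
From HB Require Import structures.
From mathcomp Require Import all_boot all_order all_algebra.
Set Implicit Arguments. Unset Strict Implicit. Unset Printing Implicit Defensive.
Import GRing.Theory Num.Theory.
Local Open Scope ring_scope.

(* A finite-dimensional graded vector space over F is modelled as 'rV[F]_N
   with a homogeneous basis: the standard basis vector e_a has degree gr a.
   Linear maps act on row vectors on the right (u |-> u *m M).
   [raises_by gr M i] : M maps degree-j elements to degree (j+i) elements. *)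
Definition raises_by (F : fieldType) (N : nat) (gr : 'I_N -> int)
    (M : 'M[F]_N) (i : nat) : Prop :=
  forall a b : 'I_N, M a b != 0 -> gr b = (gr a + i%:Z)%R.

Definition acyclic (F : fieldType) (N : nat) (M : 'M[F]_N) : Prop :=
  M *m M = 0 /\ (kermx M == M)%MS.

(* Main.v *)
Require Import Defs.
From HB Require Import structures.
From mathcomp Require Import all_boot all_order all_algebra zify.
From Stdlib Require Import Classical.
Import GRing.Theory Num.Theory.
Local Open Scope ring_scope.


Definition msk {F : fieldType} {N : nat} (gr : 'I_N -> int) (h : int) : 'M[F]_N :=
  diag_mx (\row_a ((gr a == h)%:R)).

Lemma mskMl (F : fieldType) N gr h (M : 'M[F]_N) a b :
  (msk gr h *m M) a b = (gr a == h)%:R * M a b.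
Proof. by rewrite mul_diag_mx !mxE. Qed.

Lemma mskMr (F : fieldType) N gr h (M : 'M[F]_N) a b :
  (M *m msk gr h) a b = M a b * (gr b == h)%:R.
Proof. by rewrite mul_mx_diag !mxE. Qed.

Lemma rank_msk (F : fieldType) N gr h :
  (\rank (msk (F:=F) gr h) <= #|[set a : 'I_N | gr a == h]|)%N.
Proof.
rewrite /msk diag_mx_sum_delta.
have -> : #|[set a : 'I_N | gr a == h]| = (\sum_(a : 'I_N) (gr a == h : nat))%N.
  rewrite -sum1_card big_mkcond /=; apply: eq_bigr => i _; rewrite inE.
  by case: (gr i == h).
apply: (big_ind2 (fun (A : 'M[F]_N) n => (\rank A <= n)%N)).
- by rewrite mxrank0.
- move=> A1 n1 A2 n2 h1 h2; apply: leq_trans (mxrank_add _ _) _; exact: leq_add.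
- move=> i _; rewrite !mxE; case: (gr i == h) => /=.
  + by rewrite scale1r mxrank_delta.
  + by rewrite scale0r mxrank0.
Qed.

Lemma mulmx0P (F : fieldType) N (A B : 'M[F]_N) :
  (forall a c b, A a c != 0 -> B c b != 0 -> False) -> A *m B = 0.
Proof.
move=> H; apply/matrixP => a b; rewrite !mxE big1 // => c _.
case: (eqVneq (A a c) 0) => [->|h1]; first by rewrite mul0r.
case: (eqVneq (B c b) 0) => [->|h2]; first by rewrite mulr0.
by case: (H a c b h1 h2).
Qed.

Lemma mskI (F : fieldType) N gr h1 h2 : h1 != h2 ->
  msk (F:=F) (N:=N) gr h1 *m msk gr h2 = 0.
Proof.
move=> ne; apply/matrixP => a b; rewrite mskMl !mxE.
case: (eqVneq (gr a) h1) => [e|]; last by rewrite mul0r.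
by rewrite e (negbTE ne) mul0rn mulr0.
Qed.

Lemma mskK (F : fieldType) N gr h :
  msk (F:=F) (N:=N) gr h *m msk gr h = msk gr h.
Proof.
apply/matrixP => a b; rewrite mskMl !mxE.
by case: (gr a == h); rewrite ?mul1r ?mul0r ?mul0rn.
Qed.

Lemma mxDE (F : fieldType) N (A B : 'M[F]_N) a b : (A + B) a b = A a b + B a b.
Proof. by rewrite mxE. Qed.

Lemma card_setE N (gr : 'I_N -> int) h :
  #|[set a : 'I_N | gr a == h]| = (\sum_(a : 'I_N) (gr a == h : nat))%N.
Proof.
rewrite -sum1_card big_mkcond /=; apply: eq_bigr => i _; rewrite inE.
by case: (gr i == h).
Qed.


Theorem lemma4p10 (F : fieldType) (N : nat) (gr : 'I_N -> int)
    (k : nat) (d : nat -> 'M[F]_N) :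
  (forall i, (1 <= i <= k)%N -> raises_by gr (d i) i) ->
  acyclic (\sum_(1 <= i < k.+1) d i) ->
  (exists g : int,
     (forall a : 'I_N, gr a = g \/ gr a = g + 1 \/ gr a = g + 2) /\
     #|[set a : 'I_N | (gr a == g + 1)%R]| =
       (#|[set a : 'I_N | (gr a == g)%R]| + #|[set a : 'I_N | (gr a == g + 2)%R]|)%N) ->
  acyclic (d 1%N).
Proof.
move=> Hd [HDD HkD] [g [Hg Hc]].
set D := \sum_(1 <= i < k.+1) d i in HDD HkD.
have rD : (\rank D * 2 = N)%N.
  have := mxrank_ker D; rewrite (eqmx_rank HkD).
  have := rank_leq_row D; lia.
case: k Hd @D HDD HkD rD => [|k] Hd D HDD HkD rD.
  have D0 : D = 0 by rewrite /D big_geq.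
  move: rD; rewrite D0 mxrank0 /= => N0; subst N.
  split; first by apply/matrixP => [[]].
  have -> : kermx (d 1%N) = 0 by apply/matrixP => [[]].
  have -> : d 1%N = 0 by apply/matrixP => [[]].
  by rewrite !submx_refl.
set d1 := d 1%N.
set E := \sum_(2 <= i < k.+2) d i.
have DE : D = d1 + E by rewrite /D big_ltn.
have Hd1 : forall a b, d1 a b != 0 -> gr b = gr a + 1.
  by move=> a b; apply: (Hd 1%N).
have HE : forall a b, E a b != 0 -> gr a = g /\ gr b = g + 2.
  move=> a b; rewrite /E summxE big_nat => nz.
  case: (classic (exists i, (2 <= i < k.+2)%N /\ d i a b != 0)).
    move=> [i [/andP [i2 ik] nzi]].
    have := Hd i ltac:(lia) a b nzi; have := Hg a; have := Hg b; lia.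
  move=> Hn; exfalso; move: nz; rewrite big1 ?eqxx // => i /andP [i2 ik].
  case: (eqVneq (d i a b) 0) => // nz'; exfalso; apply: Hn; exists i.
  by split => //; apply/andP.
have HD1 : d1 *m d1 = 0.
  have e1 : d1 *m E = 0.
    apply: mulmx0P => a c b /Hd1 h1 /HE [h2 _]; have := Hg a; lia.
  have e2 : E *m d1 = 0.
    apply: mulmx0P => a c b /HE [_ h1] /Hd1 h2; have := Hg b; lia.
  have e3 : E *m E = 0.
    apply: mulmx0P => a c b /HE [_ h1] /HE [h2 _]; lia.
  by move: HDD; rewrite DE mulmxDl !mulmxDr e1 e2 e3 !addr0.
split => //.
pose P := @msk F N gr.
have ne01 : (g == g + 1) = false by apply/eqP; lia.
have ne02 : (g == g + 2) = false by apply/eqP; lia.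
have ne10 : (g + 1 == g) = false by apply/eqP; lia.
have ne12 : (g + 1 == g + 2) = false by apply/eqP; lia.
have ne20 : (g + 2 == g) = false by apply/eqP; lia.
have ne21 : (g + 2 == g + 1) = false by apply/eqP; lia.
have eqa : D = d1 *m P (g+1)%R + D *m P (g+2)%R.
  rewrite DE; apply/matrixP => a b; rewrite /P !mxDE !mskMr !mxDE.
  case: (eqVneq (d1 a b) 0) => [d0|/Hd1 h1];
  case: (eqVneq (E a b) 0) => [e0|/HE h2];
  have [ga|[ga|ga]] := Hg a; have [gb|[gb|gb]] := Hg b;
  (try rewrite d0); (try rewrite e0); (try rewrite ga); (try rewrite gb);
  (try (exfalso; lia));
  rewrite ?eqxx ?ne01 ?ne02 ?ne10 ?ne12 ?ne20 ?ne21 /= ?mulr1 ?mulr0 ?mul1r ?mul0r ?addr0 ?add0r //.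
have eqb : D = P g *m D + d1 *m P (g+2)%R.
  rewrite DE; apply/matrixP => a b; rewrite /P !mxDE mskMl mskMr !mxDE.
  case: (eqVneq (d1 a b) 0) => [d0|/Hd1 h1];
  case: (eqVneq (E a b) 0) => [e0|/HE h2];
  have [ga|[ga|ga]] := Hg a; have [gb|[gb|gb]] := Hg b;
  (try rewrite d0); (try rewrite e0); (try rewrite ga); (try rewrite gb);
  (try (exfalso; lia));
  rewrite ?eqxx ?ne01 ?ne02 ?ne10 ?ne12 ?ne20 ?ne21 /= ?mulr1 ?mulr0 ?mul1r ?mul0r ?addr0 ?add0r //.
have eqc1 : d1 *m P (g+1)%R = P g *m d1.
  apply/matrixP => a b; rewrite /P mskMl mskMr.
  case: (eqVneq (d1 a b) 0) => [d0|/Hd1 h1];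
  case: (eqVneq (E a b) 0) => [e0|/HE h2];
  have [ga|[ga|ga]] := Hg a; have [gb|[gb|gb]] := Hg b;
  (try rewrite d0); (try rewrite e0); (try rewrite ga); (try rewrite gb);
  (try (exfalso; lia));
  rewrite ?eqxx ?ne01 ?ne02 ?ne10 ?ne12 ?ne20 ?ne21 /= ?mulr1 ?mulr0 ?mul1r ?mul0r ?addr0 ?add0r //.
have eqc2 : d1 *m P (g+2)%R = P (g+1)%R *m d1.
  apply/matrixP => a b; rewrite /P mskMl mskMr.
  case: (eqVneq (d1 a b) 0) => [d0|/Hd1 h1];
  case: (eqVneq (E a b) 0) => [e0|/HE h2];
  have [ga|[ga|ga]] := Hg a; have [gb|[gb|gb]] := Hg b;
  (try rewrite d0); (try rewrite e0); (try rewrite ga); (try rewrite gb);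
  (try (exfalso; lia));
  rewrite ?eqxx ?ne01 ?ne02 ?ne10 ?ne12 ?ne20 ?ne21 /= ?mulr1 ?mulr0 ?mul1r ?mul0r ?addr0 ?add0r //.
have Ncount : N = (#|[set a : 'I_N | (gr a == g)%R]| + #|[set a : 'I_N | (gr a == g + 1)%R]|
                   + #|[set a : 'I_N | (gr a == g + 2)%R]|)%N.
  rewrite !card_setE; have NS : (\sum_(a : 'I_N) 1)%N = N by rewrite sum1_card card_ord.
  rewrite -[in LHS]NS.
  rewrite -!big_split /=.
  apply: eq_bigr => a _; have [->|[->|->]] := Hg a;
  by rewrite ?eqxx ?ne01 ?ne02 ?ne10 ?ne12 ?ne20 ?ne21.
have ra : (\rank D <= \rank (d1 *m P (g+1)%R) + #|[set a : 'I_N | (gr a == g + 2)%R]|)%N.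
  rewrite {1}eqa; apply: leq_trans (mxrank_add _ _) _; apply: leq_add => //.
  apply: leq_trans (mxrankM_maxr _ _) _; exact: rank_msk.
have rb : (\rank D <= #|[set a : 'I_N | (gr a == g)%R]| + \rank (d1 *m P (g+2)%R))%N.
  rewrite {1}eqb; apply: leq_trans (mxrank_add _ _) _; apply: leq_add => //.
  apply: leq_trans (mxrankM_maxl _ _) _; exact: rank_msk.
have rc : (\rank (d1 *m P (g+1)%R) + \rank (d1 *m P (g+2)%R) <= \rank d1)%N.
  have disj : ((d1 *m P (g+1)%R) :&: (d1 *m P (g+2)%R))%MS = 0.
    apply/eqP; rewrite -submx0.
    apply: submx_trans (capmxS (submxMl _ _) (submxMl _ _)) _.
    set X := (P (g+1)%R :&: P (g+2)%R)%MS.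
    have /submxP [Y eY] : (X <= P (g+1)%R)%MS := capmxSl _ _.
    have /submxP [Z eZ] : (X <= P (g+2)%R)%MS := capmxSr _ _.
    have XP : X = X *m P (g+2)%R by rewrite {2}eZ -mulmxA /P mskK -eZ.
    have -> : X = 0 by rewrite XP eY -mulmxA /P mskI ?mulmx0 ?ne12.
    by rewrite sub0mx.
  rewrite -mxrank_disjoint_sum //; apply: mxrankS.
  by rewrite addsmx_sub eqc1 eqc2 !submxMl.
have rk : (\rank D <= \rank d1)%N by lia.
have sub : (d1 <= kermx d1)%MS by rewrite sub_kermx HD1.
rewrite sub andbT; move: (mxrank_leqif_sup sub) => [_ <-].
rewrite mxrank_ker; apply/eqP; have := rank_leq_row d1; have := mxrankS sub; rewrite mxrank_ker; lia.
Qed.
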